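(* In the setting described in the context, let $\mathcal L_\tau(\theta)=\mathcal L(\theta)+\frac\tau2\|\theta\|_2^2$ with $\tau=c_\tau\min\{\kappa_1/\kappa_2,1/(\kappa_3\sqrt{d+1})\}\sqrt{\log n/(nL)}$ for a constant $c_\tau>0$. Then with probability at least $1-O(n^{-10})$, $$\|[\nabla\mathcal L_\tau(\theta^* )]_{1:n}\|_\infty\lesssim\sqrt{\frac{np\log n}{L}},\qquad\|[\nabla\mathcal L_\tau(\theta^* )]_{n+1:n+d}\|_2\lesssim\sqrt{\frac{(d+1)np\log n}{L}}.$$
   Context: Setting. Items $1,\dots,n$ have fixed covariates $x_1,\dots,x_n\in\mathbb R^d$, $d<n$, rescaled so $\|x_i\|_2\le\sqrt{(d+1)/n}$; $\tilde x_i=(e_i^\top,x_i^\top)^\top\in\mathbb R^{n+d}$, $e_i$ canonical in $\mathbb R^n$; $\theta=(\alpha^\top,\beta^\top)^\top$. True $\theta^*=(\alpha^{*\top},\beta^{*\top})^\top$. Erdős–Rényi comparison graph $\mathcal G=([n],\mathcal E)$, edge probability $p$; for each edge and $l\in[L]$, independent $y^{(l)}_{j,i}\in\{0,1\}$ with $P(y^{(l)}_{j,i}=1)=\phi(\tilde x_i^\top\theta^*-\tilde x_j^\top\theta^* )$, $\phi(t)=e^t/(1+e^t)$, $y^{(l)}_{i,j}=1-y^{(l)}_{j,i}$, $y_{j,i}=L^{-1}\sum_ly^{(l)}_{j,i}$. $\mathcal L(\theta)=\sum_{(i,j)\in\mathcal E,i>j}\{-y_{j,i}(\tilde x_i^\top\theta-\tilde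 x_j^\top\theta)+\log(1+e^{\tilde x_i^\top\theta-\tilde x_j^\top\theta})\}$. Assumption: $\Sigma=\sum_{j<i}(\tilde x_i-\tilde x_j)(\tilde x_i-\tilde x_j)^\top$ has $\|\Sigma\|\le c_1n$. Standing assumption: $pn>c_p\log n$ for a constant $c_p>0$, $n$ large. $\kappa_1=\exp(\max_{i,j}(\tilde x_i^\top\theta^*-\tilde x_j^\top\theta^* ))$, $\kappa_2=\max_i|\alpha_i^*|$, $\kappa_3=\|\theta^*\|_2/\sqrt n$. $a\lesssim b$: $a\le Cb$ with $C$ independent of $n,p,L,d,\kappa$'s. *)

(* Defs.v *)
From HB Require Import structures.
From mathcomp Require Import all_boot all_order all_algebra.
From mathcomp Require Import all_classical all_reals all_analysis.
Set Implicit Arguments. Unset Strict Implicit. Unset Printing Implicit Defensive.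
Import Order.TTheory GRing.Theory Num.Theory.
Local Open Scope ring_scope.

Section BTL.
Variable R : realType.
Variables (n d L : nat).

Definition l2c m (v : 'cV[R]_m) : R := Num.sqrt (\sum_(k < m) v k 0 ^+ 2).
Definition l2r m (v : 'rV[R]_m) : R := Num.sqrt (\sum_(k < m) v 0 k ^+ 2).
Definition dotc m (u v : 'cV[R]_m) : R := \sum_(k < m) u k 0 * v k 0.

Definition phi (t : R) : R := expR t / (1 + expR t).

Definition xt (x : 'I_n -> 'rV[R]_d) (i : 'I_n) : 'cV[R]_(n + d) :=
  col_mx (delta_mx i 0) (x i)^T.

Definition Sigma (x : 'I_n -> 'rV[R]_d) : 'M[R]_(n + d) :=
  \sum_(i < n) \sum_(j < n | (j < i)%N)
     (xt x i - xt x j) *m (xt x i - xt x j)^T.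

Definition score (x : 'I_n -> 'rV[R]_d) (th : 'cV[R]_(n + d)) (i : 'I_n) : R :=
  dotc (xt x i) th.

(* Outcome space: A (i,j) = 1 iff {i,j} is an edge of G (only used for j<i);
   Y (l,i,j) = y^{(l)}_{j,i}  (only used for j<i). *)
Definition Omega := ({ffun 'I_n * 'I_n -> bool} * {ffun 'I_L * 'I_n * 'I_n -> bool})%type.

(* probability weight of an outcome: independent Bernoulli(p) edges,
   independent Bernoulli(phi(s_i - s_j)) comparisons; unused bits (j >= i)
   are forced to false. *)
Definition weight (p : R) (x : 'I_n -> 'rV[R]_d) (ths : 'cV[R]_(n + d))
    (w : Omega) : R :=
  (\prod_(ij : 'I_n * 'I_n)
     (if (ij.2 < ij.1)%N then (if w.1 ij then p else 1 - p)
      else (if w.1 ij then 0 else 1))) *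
  (\prod_(lij : 'I_L * 'I_n * 'I_n)
     (let i := lij.1.2 in let j := lij.2 in
      let q := phi (score x ths i - score x ths j) in
      if (j < i)%N then (if w.2 lij then q else 1 - q)
      else (if w.2 lij then 0 else 1))).

Definition Prob (p : R) (x : 'I_n -> 'rV[R]_d) (ths : 'cV[R]_(n + d))
    (E : pred Omega) : R :=
  \sum_(w : Omega | E w) weight p x ths w.

Definition ybar (w : Omega) (i j : 'I_n) : R :=
  (L%:R)^-1 * \sum_(l < L) (w.2 (l, i, j))%:R.

Definition loss (x : 'I_n -> 'rV[R]_d) (w : Omega) (th : 'cV[R]_(n + d)) : R :=
  \sum_(i < n) \sum_(j < n | (j < i)%N && w.1 (i, j))
    (- ybar w i j * (score x th i - score x th j)
     + ln (1 + expR (score x th i - score x th j))).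

Definition kappa1 (x : 'I_n -> 'rV[R]_d) (ths : 'cV[R]_(n + d)) : R :=
  expR (\big[Order.max/0]_(i < n) \big[Order.max/0]_(j < n)
          (score x ths i - score x ths j)).
Definition kappa2 (ths : 'cV[R]_(n + d)) : R :=
  \big[Order.max/0]_(i < n) `|ths (lshift d i) 0|.
Definition kappa3 (ths : 'cV[R]_(n + d)) : R := l2c ths / Num.sqrt n%:R.

(* min{kappa1/kappa2, 1/(kappa3 sqrt(d+1))}, with a/0 read as +infinity;
   if both denominators vanish (theta* = 0) the penalty term tau*theta* is 0
   whatever tau is, and we set the factor to 0. *)
Definition tau_factor (x : 'I_n -> 'rV[R]_d) (ths : 'cV[R]_(n + d)) : R :=
  let a := kappa1 x ths / kappa2 ths in
  let b := (kappa3 ths * Num.sqrt (d.+1)%:R)^-1 in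
  if kappa2 ths == 0 then (if kappa3 ths == 0 then 0 else b)
  else if kappa3 ths == 0 then a else Order.min a b.

Definition tau (c_tau : R) (x : 'I_n -> 'rV[R]_d) (ths : 'cV[R]_(n + d)) : R :=
  c_tau * tau_factor x ths * Num.sqrt (ln n%:R / (n%:R * L%:R)).

Definition loss_tau (c_tau : R) (x : 'I_n -> 'rV[R]_d) (ths : 'cV[R]_(n + d))
    (w : Omega) (th : 'cV[R]_(n + d)) : R :=
  loss x w th + tau c_tau x ths / 2 * l2c th ^+ 2.

Definition grad (f : 'cV[R]_(n + d) -> R) (th : 'cV[R]_(n + d)) (k : 'I_(n + d)) : R :=
  derive1 (fun t : R => f (th + t *: delta_mx k 0)) 0.

Definition supnorm_first (g : 'I_(n + d) -> R) : R :=
  \big[Order.max/0]_(i < n) `|g (lshift d i)|.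
Definition l2_last (g : 'I_(n + d) -> R) : R :=
  Num.sqrt (\sum_(k < d) g (rshift n k) ^+ 2).

End BTL.

(* Main.v *)
Require Import Defs.
From HB Require Import structures.
From mathcomp Require Import all_boot all_order all_algebra.
From mathcomp Require Import all_classical all_reals all_analysis.
From mathcomp Require Import ring lra.
Import Order.TTheory GRing.Theory Num.Theory.
Set Implicit Arguments. Unset Strict Implicit. Unset Printing Implicit Defensive.
Local Open Scope ring_scope.

Section Aux.
Variable R : realType.

Lemma sum_ffun_prod (I : finType) (F : I -> bool -> R) :
  \sum_(f : {ffun I -> bool}) \prod_i F i (f i) = \prod_i (F i true + F i false).
Proof. by rewrite -bigA_distr_bigA; apply: eq_bigr => i _; rewrite big_bool. Qed.

Lemma expR_le_quad (x : R) : x <= 1/2 -> expR x <= 1 + x + 2 * x ^+ 2.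
Proof.
move=> hx.
have h1 : 0 < 1 - x by lra.
have h2 : 1 - x <= expR (- x) by have := expR_ge1Dx (- x); lra.
have h3 : expR x <= (1 - x)^-1.
  have -> : expR x = (expR (- x))^-1 by rewrite expRN invrK.
  by rewrite lef_pV2 ?posrE ?expR_gt0.
apply: (le_trans h3).
rewrite -(@ler_pM2l _ (1 - x)) // mulfV ?gt_eqF //.
have : 0 <= x ^+ 2 * (1 - 2 * x) by apply: mulr_ge0; [exact: sqr_ge0| lra].
move=> h; nra.
Qed.

Lemma bern_mgf (q mu : R) : 0 <= q <= 1 -> `|mu| <= 1/2 ->
  q * expR (mu * (q - 1)) + (1 - q) * expR (mu * q) <= expR (mu ^+ 2 / 2).
Proof.
move=> /andP[q0 q1] hmu.
have hm := hmu; rewrite ler_norml in hm; case/andP: hm => hm1 hm2.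
have e1 := (@expR_le_quad (mu * (q - 1))) ltac:(nra).
have e2 := (@expR_le_quad (mu * q)) ltac:(nra).
apply: le_trans (expR_ge1Dx _).
have : q * expR (mu * (q - 1)) <= q * (1 + mu * (q - 1) + 2 * (mu * (q - 1)) ^+ 2)
  by apply: ler_wpM2l.
have : (1 - q) * expR (mu * q) <= (1 - q) * (1 + mu * q + 2 * (mu * q) ^+ 2)
  by apply: ler_wpM2l; lra.
move=> a b.
have : 0 <= mu ^+ 2 * (1/4 - q * (1 - q)) by apply: mulr_ge0; [exact: sqr_ge0| have := sqr_ge0 (q - 1/2); rewrite expr2; nra].
move=> c.
have E : forall a b : R, a <= b -> a <= b by [].
apply: le_trans (lerD b a) _.
nra.
Qed.

Lemma u_mgf (p u : R) : 0 <= p <= 1 -> 0 <= u <= 1/2 ->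
  p * expR u + (1 - p) <= expR (2 * p * u).
Proof.
move=> /andP[p0 p1] /andP[u0 u1].
have e := (@expR_le_quad u u1).
apply: le_trans (expR_ge1Dx _).
have : p * expR u <= p * (1 + u + 2 * u ^+ 2) by apply: ler_wpM2l.
have : 0 <= p * u * (1 - 2 * u) by apply: mulr_ge0; [exact: mulr_ge0|lra].
rewrite expr2; nra.
Qed.

End Aux.

Section MGF.
Variables (R : realType) (n d L : nat) (p : R) (x : 'I_n -> 'rV[R]_d)
  (ths : 'cV[R]_(n + d)).

Definition qq (i j : 'I_n) : R := phi (score x ths i - score x ths j).

Definition wA (ij : 'I_n * 'I_n) (b : bool) : R :=
  if (ij.2 < ij.1)%N then (if b then p else 1 - p) else (if b then 0 else 1).
Definition wY (lij : 'I_L * 'I_n * 'I_n) (b : bool) : R :=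
  if (lij.2 < lij.1.2)%N then (if b then qq lij.1.2 lij.2 else 1 - qq lij.1.2 lij.2)
  else (if b then 0 else 1).

Lemma weightE (w : Omega n L) : weight p x ths w =
  (\prod_ij wA ij (w.1 ij)) * (\prod_lij wY lij (w.2 lij)).
Proof. by []. Qed.

Lemma sum_Omega (F : Omega n L -> R) :
  \sum_(w : Omega n L) F w = \sum_a \sum_y F (a, y).
Proof. by rewrite (pair_bigA _ (fun a y => F (a, y))); apply: eq_bigr => -[]. Qed.

Lemma prod_lij (F : 'I_L -> 'I_n -> 'I_n -> R) :
  \prod_(lij : 'I_L * 'I_n * 'I_n) F lij.1.1 lij.1.2 lij.2 =
  \prod_(i < n) \prod_(j < n) \prod_(l < L) F l i j.
Proof.
rewrite -(pair_bigA _ (fun li j => F li.1 li.2 j)).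
rewrite -(pair_bigA _ (fun l i => \prod_j F l i j)).
rewrite exchange_big; apply: eq_bigr => i _.
by rewrite exchange_big.
Qed.

Lemma prod_ij (F : 'I_n -> 'I_n -> R) :
  \prod_(ij : 'I_n * 'I_n) F ij.1 ij.2 = \prod_(i < n) \prod_(j < n) F i j.
Proof. by rewrite -(pair_bigA _ F). Qed.

End MGF.

Section MGF2.
Variables (R : realType) (n d L : nat) (p : R) (x : 'I_n -> 'rV[R]_d)
  (ths : 'cV[R]_(n + d)).

Lemma phi01 (t : R) : 0 <= phi t <= 1.
Proof.
rewrite /phi; have := expR_gt0 t => h.
apply/andP; split; first by apply: divr_ge0; lra.
by rewrite ler_pdivrMr; lra.
Qed.

Definition Sg (v : 'I_n -> 'I_n -> R) (w : Omega n L) : R :=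
  \sum_(i < n) \sum_(j < n | (j < i)%N && w.1 (i, j))
     (qq x ths i j - ybar R w i j) * v i j.

Definition Gf (lam : R) (v : 'I_n -> 'I_n -> R) (a : {ffun 'I_n * 'I_n -> bool})
   (l : 'I_L) (i j : 'I_n) (b : bool) : R :=
  if (j < i)%N && a (i, j) then expR (lam * v i j / L%:R * (qq x ths i j - b%:R)) else 1.

Hypothesis L0 : (0 < L)%N.

Lemma expS lam v a y :
  expR (lam * Sg v (a, y)) =
  \prod_(lij : 'I_L * 'I_n * 'I_n) Gf lam v a lij.1.1 lij.1.2 lij.2 (y lij).
Proof.
rewrite [RHS](_ : _ = \prod_(i < n) \prod_(j < n) \prod_(l < L) Gf lam v a l i j (y (l, i, j)));
  last by rewrite -(prod_lij (fun l i j => Gf lam v a l i j (y (l, i, j))));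
    apply: eq_bigr => -[[l i] j] _.
rewrite /Sg mulr_sumr expR_sum; apply: eq_bigr => i _.
rewrite mulr_sumr expR_sum big_mkcond /=; apply: eq_bigr => j _.
rewrite /Gf; case: ifP => _; last by rewrite big1.
rewrite -expR_sum; congr expR.
rewrite -mulr_sumr sumrB sumr_const card_ord /ybar /=.
have hL : (L%:R : R) != 0 by rewrite pnatr_eq0 -lt0n.
by rewrite -mulr_natr; field.
Qed.

End MGF2.

Section MGF3.
Variables (R : realType) (n d L : nat) (p : R) (x : 'I_n -> 'rV[R]_d)
  (ths : 'cV[R]_(n + d)).
Hypothesis L0 : (0 < L)%N.

Lemma ystep lam (v : 'I_n -> 'I_n -> R) a :
  (forall i j : 'I_n, (j < i)%N -> (lam * v i j) ^+ 2 <= L%:R / 4) ->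
  \sum_(y : {ffun 'I_L * 'I_n * 'I_n -> bool})
     (\prod_lij wY x ths lij (y lij)) * expR (lam * Sg x ths v (a, y))
  <= \prod_(ij : 'I_n * 'I_n)
       (if (ij.2 < ij.1)%N && a ij then expR ((lam * v ij.1 ij.2) ^+ 2 / (2 * L%:R)) else 1).
Proof.
move=> hv.
have hL : (0 : R) < L%:R by rewrite ltr0n.
under eq_bigr => y _ do rewrite (expS _ _ L0) -big_split /=.
rewrite (sum_ffun_prod (fun lij b => wY x ths lij b * Gf x ths lam v a lij.1.1 lij.1.2 lij.2 b)).
pose K (l : 'I_L) (i j : 'I_n) := if (j < i)%N && a (i, j)
   then expR ((lam * v i j / L%:R) ^+ 2 / 2) else 1.
apply: (@le_trans _ _ (\prod_(lij : 'I_L * 'I_n * 'I_n) K lij.1.1 lij.1.2 lij.2)).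
  apply: ler_prod => -[[l i] j] _ /=.
  rewrite /wY /Gf /K /=.
  have := phi01 (score x ths i - score x ths j); rewrite -/(qq x ths i j) => hq.
  case: (ltnP j i) => hij /=; last first.
    by rewrite mul0r add0r mul1r lexx ler01.
  case: (a (i, j)) => /=; last first.
    by rewrite !mulr1 subrKC lexx ler01.
  have e0 := expR_gt0 (lam * v i j / L%:R * (qq x ths i j - 1%:R)).
  have e1 := expR_gt0 (lam * v i j / L%:R * (qq x ths i j - 0%:R)).
  apply/andP; split.
    apply: addr_ge0; apply: mulr_ge0; lra.
  rewrite subr0.
  apply: bern_mgf => //.
  have h1 := hv i j hij.
  have h2 : (lam * v i j / L%:R) ^+ 2 <= 1 / 4.
    rewrite expr_div_n ler_pdivrMr ?exprn_gt0 //.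
    apply: (le_trans h1).
    have : 1 <= (L%:R : R) by rewrite ler1n.
    move=> h; rewrite expr2; nra.
  have h3 := normr_ge0 (lam * v i j / L%:R).
  rewrite -real_normK ?num_real // in h2.
  rewrite expr2 in h2; nra.
rewrite (prod_lij (fun l i j => K l i j)).
rewrite [X in _ <= X](_ : _ = \prod_(i < n) \prod_(j < n) (if (j < i)%N && a (i, j)
   then expR ((lam * v i j) ^+ 2 / (2 * L%:R)) else 1)); last first.
  by rewrite -(prod_ij (fun i j => if (j < i)%N && a (i, j)
   then expR ((lam * v i j) ^+ 2 / (2 * L%:R)) else 1)); apply: eq_bigr => -[i j].
rewrite le_eqVlt; apply/orP; left; apply/eqP.
apply: eq_bigr => i _; apply: eq_bigr => j _.
rewrite /K; case: ifP => _; last by rewrite big1.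
rewrite prodr_const card_ord -expRM_natl.
rewrite expr_div_n; congr expR; field.
by rewrite pnatr_eq0 -lt0n.
Qed.

End MGF3.

Section MGF4.
Variables (R : realType) (n d L : nat) (p : R) (x : 'I_n -> 'rV[R]_d)
  (ths : 'cV[R]_(n + d)).
Hypothesis L0 : (0 < L)%N.
Hypothesis p01 : 0 <= p <= 1.

Lemma wA_ge0 (ij : 'I_n * 'I_n) b : 0 <= wA p ij b.
Proof. by case/andP: p01 => ? ?; rewrite /wA; case: ifP; case: b => //; lra. Qed.

Lemma mgf lam (v : 'I_n -> 'I_n -> R) :
  (forall i j : 'I_n, (j < i)%N -> (lam * v i j) ^+ 2 <= L%:R / 4) ->
  \sum_(w : Omega n L) weight p x ths w * expR (lam * Sg x ths v w)
  <= expR (p * lam ^+ 2 * (\sum_(i < n) \sum_(j < n | (j < i)%N) v i j ^+ 2) / L%:R).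
Proof.
move=> hv.
have hL : (0 : R) < L%:R by rewrite ltr0n.
rewrite sum_Omega.
under eq_bigr => a _ do under eq_bigr => y _ do rewrite weightE /= -mulrA.
under eq_bigr => a _ do rewrite -mulr_sumr.
apply: (@le_trans _ _ (\sum_(a : {ffun 'I_n * 'I_n -> bool})
   (\prod_ij wA p ij (a ij)) * \prod_(ij : 'I_n * 'I_n)
       (if (ij.2 < ij.1)%N && a ij then expR ((lam * v ij.1 ij.2) ^+ 2 / (2 * L%:R)) else 1))).
  apply: ler_sum => a _; apply: ler_wpM2l.
    by apply: prodr_ge0 => ij _; exact: wA_ge0.
  exact: ystep.
under eq_bigr => a _ do rewrite -big_split /=.
rewrite (sum_ffun_prod (fun ij b => wA p ij b * (if (ij.2 < ij.1)%N && b
   then expR ((lam * v ij.1 ij.2) ^+ 2 / (2 * L%:R)) else 1))).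
apply: (@le_trans _ _ (\prod_(ij : 'I_n * 'I_n) expR (if (ij.2 < ij.1)%N then
   p * (lam * v ij.1 ij.2) ^+ 2 / L%:R else 0))).
  apply: ler_prod => -[i j] _ /=; rewrite /wA /=.
  case: (ltnP j i) => hij /=; last first.
    by rewrite mul0r add0r mulr1 expR0 lexx ler01.
  apply/andP; split.
    apply: addr_ge0; apply: mulr_ge0; (try exact: expR_ge0); case/andP: p01; lra.
  rewrite mulr1.
  have -> : p * (lam * v i j) ^+ 2 / L%:R = 2 * p * ((lam * v i j) ^+ 2 / (2 * L%:R)).
    by field; rewrite gt_eqF.
  apply: u_mgf => //.
  have h1 := hv i j hij.
  have h0 : 0 <= (lam * v i j) ^+ 2 by exact: sqr_ge0.
  apply/andP; split; first by apply: divr_ge0; lra.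
  rewrite ler_pdivrMr; last lra.
  have : 1 <= (L%:R : R) by rewrite ler1n.
  nra.
rewrite -expR_sum ler_expR.
rewrite -(pair_bigA _ (fun i j : 'I_n => if (j < i)%N then
   p * (lam * v i j) ^+ 2 / L%:R else 0)) /=.
rewrite le_eqVlt; apply/orP; left; apply/eqP.
rewrite mulr_sumr mulr_suml; apply: eq_bigr => i _.
rewrite mulr_sumr mulr_suml [RHS]big_mkcond /=; apply: eq_bigr => j _.
by case: ifP => _; rewrite ?mulr0 ?mul0r //; rewrite exprMn; field; rewrite gt_eqF.
Qed.

End MGF4.

Section Tail.
Variables (R : realType) (n d L : nat) (p : R) (x : 'I_n -> 'rV[R]_d)
  (ths : 'cV[R]_(n + d)).
Hypothesis L0 : (0 < L)%N.
Hypothesis p01 : 0 <= p <= 1.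

Lemma wY_ge0 (lij : 'I_L * 'I_n * 'I_n) b : 0 <= wY x ths lij b.
Proof.
rewrite /wY; have := phi01 (score x ths lij.1.2 - score x ths lij.2).
rewrite -/(qq x ths _ _) => h.
by case: ifP; case: b => //; lra.
Qed.

Lemma weight_ge0 (w : Omega n L) : 0 <= weight p x ths w.
Proof.
rewrite weightE; apply: mulr_ge0; apply: prodr_ge0 => ij _.
  exact: wA_ge0.
exact: wY_ge0.
Qed.

Lemma weight_sum1 : \sum_(w : Omega n L) weight p x ths w = 1.
Proof.
rewrite sum_Omega.
under eq_bigr => a _ do under eq_bigr => y _ do rewrite weightE /=.
under eq_bigr => a _ do rewrite -mulr_sumr.
have h1 : \prod_(lij : 'I_L * 'I_n * 'I_n) (wY x ths lij true + wY x ths lij false) = 1.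
  by apply: big1 => lij _; rewrite /wY; case: ifP => _ /=; rewrite ?add0r // subrKC.
have h2 : \prod_(ij : 'I_n * 'I_n) (wA p ij true + wA p ij false) = 1.
  by apply: big1 => ij _; rewrite /wA; case: ifP => _ /=; rewrite ?add0r // subrKC.
by rewrite (sum_ffun_prod (wY x ths)) h1; under eq_bigr => a _ do rewrite mulr1;
  rewrite (sum_ffun_prod (wA p)) h2.
Qed.

Lemma tail lam (v : 'I_n -> 'I_n -> R) t :
  0 <= lam ->
  (forall i j : 'I_n, (j < i)%N -> (lam * v i j) ^+ 2 <= L%:R / 4) ->
  Prob p x ths (fun w : Omega n L => t < Sg x ths v w) <=
  expR (- (lam * t) + p * lam ^+ 2 * (\sum_(i < n) \sum_(j < n | (j < i)%N) v i j ^+ 2) / L%:R).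
Proof.
move=> lam0 hv.
rewrite /Prob expRD.
apply: (@le_trans _ _ (\sum_(w : Omega n L) weight p x ths w * expR (lam * (Sg x ths v w - t)))).
  rewrite [X in _ <= X](bigID (fun w : Omega n L => t < Sg x ths v w)) /=.
  rewrite -[X in X <= _]addr0; apply: lerD; last first.
    by apply: sumr_ge0 => w _; apply: mulr_ge0; [exact: weight_ge0|exact: expR_ge0].
  apply: ler_sum => w hw.
  rewrite -[X in X <= _]mulr1; apply: ler_wpM2l; first exact: weight_ge0.
  rewrite -expR0 ler_expR; apply: mulr_ge0 => //; rewrite subr_ge0; exact: ltW.
under eq_bigr => w _ do rewrite mulrBr expRD mulrA.
rewrite -mulr_suml mulrC expRN -expRN; apply: ler_wpM2l; first exact: expR_ge0.
exact: mgf.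
Qed.

Lemma prob_union (I : finType) (E : pred (Omega n L)) (B : I -> pred (Omega n L)) :
  (forall w, ~~ E w -> exists k, B k w) ->
  1 - \sum_(k : I) Prob p x ths (B k) <= Prob p x ths E.
Proof.
move=> hB.
rewrite -weight_sum1 (bigID E) /= lerBlDr lerD2l.
rewrite /Prob.
apply: (@le_trans _ _ (\sum_(w | ~~ E w) \sum_(k : I) (if B k w then weight p x ths w else 0))).
  apply: ler_sum => w hw.
  have [k hk] := hB w hw.
  rewrite (bigD1 k) //= hk -[X in X <= _]addr0 lerD2l.
  by apply: sumr_ge0 => i _; case: ifP => _ //; exact: weight_ge0.
apply: (@le_trans _ _ (\sum_(w : Omega n L) \sum_(k : I) (if B k w then weight p x ths w else 0))).
  rewrite [X in _ <= X](bigID (fun w => ~~ E w)) /= -[X in X <= _]addr0 lerD2l.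
  apply: sumr_ge0 => w _; apply: sumr_ge0 => i _; case: ifP => _ //; exact: weight_ge0.
rewrite exchange_big /=; apply: ler_sum => k _.
by rewrite [X in _ <= X]big_mkcond.
Qed.

End Tail.
Section Deriv.
Variable R : realType.

Lemma is_derive_lin (c v t0 : R) : is_derive t0 1 (fun t : R => c + v * t) v.
Proof.
have h1 : is_derive t0 1 (fun t : R => v * t) v.
  have := is_deriveZ v (is_derive_id t0 (1 : R)).
  by move=> h; apply: is_derive_eq h _; rewrite /GRing.scale /= mulr1.
have := is_deriveD (is_derive_cst c t0 1) h1.
by rewrite add0r.
Qed.

Lemma is_derive_bigsum (I : Type) (r : seq I) (P : pred I) (f : I -> R -> R)
    (df : I -> R) (t0 : R) :
  (forall i, P i -> is_derive t0 1 (f i) (df i)) ->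
  is_derive t0 1 (fun t => \sum_(i <- r | P i) f i t) (\sum_(i <- r | P i) df i).
Proof.
move=> hf; elim: r => [|a r IH].
  have -> : (fun t => \sum_(i <- [::] | P i) f i t) = cst 0.
    by apply/funext => t; rewrite big_nil.
  by rewrite big_nil; exact: is_derive_cst.
have -> : (fun t => \sum_(i <- a :: r | P i) f i t) =
  (fun t => (if P a then f a t else 0) + \sum_(i <- r | P i) f i t).
  by apply/funext => t; rewrite big_cons; case: ifP => _; rewrite ?add0r.
rewrite big_cons.
case Pa: (P a).
  exact: is_deriveD (hf a Pa) IH.
have := is_deriveD (is_derive_cst 0 t0 1) IH.
by move=> h; exact: is_derive_eq h (add0r _).
Qed.

Lemma is_derive_logit (y c v : R) :
  is_derive (0:R) (1:R) (fun t : R => - y * (c + v * t) + ln (1 + expR (c + v * t)))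
    (v * (expR c / (1 + expR c) - y)).
Proof.
have hl := is_derive_lin c v 0.
have h1 : is_derive (0:R) (1:R) (fun t : R => - y * (c + v * t)) (- y * v).
  have := is_deriveZ (- y) hl.
  by [].
have h2 : is_derive (0:R) (1:R) (fun t : R => 1 + expR (c + v * t)) (expR c * v).
  have := is_derive1_comp (f := @expR R) (g := fun t => c + v * t) _ hl.
  rewrite /= mulr0 addr0 => /(_ _ (is_derive_expR c)) h.
  have := is_deriveD (is_derive_cst (1:R) (0:R) (1:R)) h.
  by rewrite add0r.
have h3 : is_derive (0:R) (1:R) (fun t : R => ln (1 + expR (c + v * t))) ((1 + expR c)^-1 * (expR c * v)).
  have := is_derive1_comp (f := @ln R) (g := fun t => 1 + expR (c + v * t)) _ h2.
  rewrite /= mulr0 addr0; apply.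
  apply: is_derive1_ln.
  by have := expR_gt0 c; lra.
have := is_deriveD h1 h3.
move=> h; apply: is_derive_eq h _.
have := expR_gt0 c => hc.
by field; have : 0 < 1 + expR c by lra; move/gt_eqF ->.
Qed.
End Deriv.

Section Grad.
Variables (R : realType) (n d L : nat) (x : 'I_n -> 'rV[R]_d)
  (ths : 'cV[R]_(n + d)).

Definition vk (k : 'I_(n + d)) (i j : 'I_n) : R := xt x i k 0 - xt x j k 0.

Lemma shiftE (th : 'cV[R]_(n + d)) k t m :
  (th + t *: delta_mx k 0) m 0 = th m 0 + (m == k)%:R * t.
Proof. by rewrite !mxE eqxx andbT mulrC. Qed.

Lemma score_shift (th : 'cV[R]_(n + d)) k t i :
  score x (th + t *: delta_mx k 0) i = score x th i + xt x i k 0 * t.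
Proof.
rewrite /score /dotc.
under eq_bigr => m _ do rewrite shiftE mulrDr.
rewrite big_split /=; congr (_ + _).
rewrite (bigD1 k) //= eqxx big1 ?addr0; first by rewrite mul1r.
by move=> m /negbTE ->; rewrite mul0r mulr0.
Qed.

Lemma l2c_sq (th : 'cV[R]_(n + d)) : l2c th ^+ 2 = \sum_(m < n + d) th m 0 ^+ 2.
Proof.
rewrite /l2c sqr_sqrtr //; apply: sumr_ge0 => m _; exact: sqr_ge0.
Qed.

Lemma grad_eq (c_tau : R) (w : Omega n L) (k : 'I_(n + d)) :
  grad (loss_tau c_tau x ths w) ths k =
  Sg x ths (vk k) w + tau L c_tau x ths * ths k 0.
Proof.
rewrite /grad derive1E.
set tt := tau L c_tau x ths.
have -> : (fun t => loss_tau c_tau x ths w (ths + t *: delta_mx k 0)) =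
  (fun t => \sum_(i < n) \sum_(j < n | (j < i)%N && w.1 (i, j))
     (- ybar R w i j * ((score x ths i - score x ths j) + vk k i j * t) +
      ln (1 + expR ((score x ths i - score x ths j) + vk k i j * t))) +
     tt / 2 * \sum_(m < n + d) (ths m 0 + (m == k)%:R * t) ^+ 2).
  apply/funext => t; rewrite /loss_tau /loss l2c_sq -/tt.
  congr (_ + _ * _); last by apply: eq_bigr => m _; rewrite shiftE.
  apply: eq_bigr => i _; apply: eq_bigr => j _.
  rewrite !score_shift /vk.
  have -> : score x ths i + xt x i k 0 * t - (score x ths j + xt x j k 0 * t) =
    score x ths i - score x ths j + (xt x i k 0 - xt x j k 0) * t by ring.
  by [].
apply: derive_val.
have h1 := @is_derive_bigsum _ _ (index_enum 'I_n) xpredT _ _ 0 (fun i _ =>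
  @is_derive_bigsum _ _ (index_enum 'I_n) (fun j => (j < i)%N && w.1 (i, j)) _ _ 0
    (fun j _ => is_derive_logit (ybar R w i j) (score x ths i - score x ths j) (vk k i j))).
have h2 := @is_derive_bigsum _ _ (index_enum 'I_(n + d)) xpredT
  (fun m t => (ths m 0 + (m == k)%:R * t) ^+ 2) (fun m => (m == k)%:R * ths m 0 *+ 2) 0
  (fun m _ => is_derive_eq (is_deriveM (is_derive_lin (ths m 0) ((m == k)%:R) 0)
                        (is_derive_lin (ths m 0) ((m == k)%:R) 0)) _).
have {}h2 := h2 (fun m => ltac:(rewrite mulr0 addr0 -mulr2n; congr (_ *+ 2); exact: mulrC)).
have := is_deriveD h1 (is_deriveZ (tt / 2) h2).
move=> h; apply: is_derive_eq h _.
congr (_ + _).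
  by apply: eq_bigr => i _; apply: eq_bigr => j _; rewrite mulrC.
rewrite (bigD1 k) //= eqxx big1 ?addr0; last first.
  by move=> m /negbTE ->; rewrite mul0r mul0rn.
rewrite mul1r /GRing.scale /= -[ths k 0 *+ 2]mulr_natr; field.
by [].
Qed.
End Grad.

Section Tn.
Variables (R : realType) (n d L : nat) (p : R) (x : 'I_n -> 'rV[R]_d)
  (ths : 'cV[R]_(n + d)) (c_p : R).

Definition aa : R := c_p / (16 + c_p).
Definition C0 : R := (11 + aa ^+ 2) / aa.
Definition Wsum (v : 'I_n -> 'I_n -> R) : R :=
  \sum_(i < n) \sum_(j < n | (j < i)%N) v i j ^+ 2.
Definition tk (v : 'I_n -> 'I_n -> R) : R :=
  C0 * Num.sqrt (p * (Wsum v + n%:R) * ln n%:R / L%:R).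

Hypothesis cp0 : 0 < c_p.

Lemma aa_gt0 : 0 < aa.
Proof. have cp := cp0; by rewrite /aa divr_gt0 //; lra. Qed.

Lemma aa_le1 : aa <= 1.
Proof. have cp := cp0; by rewrite /aa ler_pdivrMr; lra. Qed.

Lemma aa_sq : 16 * aa ^+ 2 <= c_p.
Proof.
have cp := cp0.
have h1 : aa <= c_p / 16 by rewrite /aa ler_pdivrMr ?mulrA ?ler_pdivlMr; nra.
have h2 := aa_le1; have h3 := aa_gt0.
have : aa ^+ 2 <= aa by rewrite expr2 ler_piMr //; lra.
have : aa * 16 <= c_p by rewrite -ler_pdivlMr //.
lra.
Qed.

Lemma Wsum_ge0 v : 0 <= Wsum v.
Proof. by apply: sumr_ge0 => i _; apply: sumr_ge0 => j _; exact: sqr_ge0. Qed.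

Lemma Wsum_N v : Wsum (fun i j => - v i j) = Wsum v.
Proof. by apply: eq_bigr => i _; apply: eq_bigr => j _; rewrite sqrrN. Qed.

Lemma tail_n (v : 'I_n -> 'I_n -> R) :
  (0 < L)%N -> 0 < p <= 1 -> c_p * ln n%:R < p * n%:R -> 1 <= ln (n%:R : R) ->
  (forall i j : 'I_n, (j < i)%N -> v i j ^+ 2 <= 4) ->
  Prob p x ths (fun w : Omega n L => tk v < Sg x ths v w) <= (n%:R ^+ 11)^-1.
Proof.
move=> L0 /andP[p0 p1] hpn hl hv.
have cp := cp0.
set W := Wsum v; set l := ln (n%:R : R); set Lr := (L%:R : R); set nr := (n%:R : R).
have {}hl : 1 <= l := hl.
have {}hpn : c_p * l < p * nr := hpn.
have Lr0 : 0 < Lr by rewrite /Lr ltr0n.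
have nr0 : 0 < nr.
  have : 0 < p * nr by apply: lt_trans hpn; apply: mulr_gt0 => //; lra.
  by rewrite pmulr_rgt0.
have W0 : 0 <= W := Wsum_ge0 v.
have W'0 : 0 < W + nr by lra.
have a0 := aa_gt0; have a2 := aa_sq.
set A := Lr * l / (p * (W + nr)).
have A0 : 0 <= A by apply: divr_ge0; [apply: mulr_ge0; lra | apply: mulr_ge0; lra].
set lam := aa * Num.sqrt A.
have lam0 : 0 <= lam by apply: mulr_ge0; [lra | exact: sqrtr_ge0].
have lam2 : lam ^+ 2 = aa ^+ 2 * A by rewrite /lam exprMn sqr_sqrtr.
have p01 : 0 <= p <= 1 by apply/andP; split; lra.
apply: le_trans (@tail _ _ _ _ _ x ths L0 p01 lam v (tk v) lam0 _) _.
  move=> i j hij.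
  have hv' := hv i j hij.
  rewrite exprMn lam2.
  have hA : A <= Lr * l / (p * nr).
    rewrite /A ler_pdivrMr; last by apply: mulr_gt0; lra.
    rewrite mulrAC ler_pdivlMr; last by apply: mulr_gt0; lra.
    apply: ler_wpM2l; first by apply: mulr_ge0; lra.
    apply: ler_wpM2l; lra.
  have hA2 : Lr * l / (p * nr) * (16 * aa ^+ 2) <= Lr.
    rewrite mulrAC ler_pdivrMr; last by apply: mulr_gt0; lra.
    rewrite -mulrA; apply: ler_wpM2l; first lra.
    have h := @ler_wpM2l _ l ltac:(lra) _ _ a2.
    lra.
  have hv0 : 0 <= v i j ^+ 2 := sqr_ge0 _.
  nra.
rewrite -/W.
have e1 : lam * tk v = (11 + aa ^+ 2) * l.
  rewrite /lam /tk /C0 -/W -/nr -/l -/Lr.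
  have -> : aa * Num.sqrt A * ((11 + aa ^+ 2) / aa * Num.sqrt (p * (W + nr) * l / Lr)) =
    (11 + aa ^+ 2) * (Num.sqrt A * Num.sqrt (p * (W + nr) * l / Lr)).
    by field; lra.
  rewrite -sqrtrM // /A.
  have -> : Lr * l / (p * (W + nr)) * (p * (W + nr) * l / Lr) = l ^+ 2.
    by field; apply/andP; split; lra.
  by rewrite sqrtr_sqr ger0_norm //; lra.
have e2 : p * lam ^+ 2 * W / Lr <= aa ^+ 2 * l.
  rewrite lam2 /A.
  have -> : p * (aa ^+ 2 * (Lr * l / (p * (W + nr)))) * W / Lr = aa ^+ 2 * l * (W / (W + nr)).
    by field; apply/andP; split; lra.
  rewrite -[X in _ <= X]mulr1; apply: ler_wpM2l; first by apply: mulr_ge0; [exact: sqr_ge0 | lra].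
  by rewrite ler_pdivrMr //; lra.
apply: le_trans (_ : expR (- (11%:R * l)) <= _).
  rewrite ler_expR e1.
  have e2' : p * lam ^+ 2 * (\sum_(i < n) \sum_(j < n | (j < i)%N) v i j ^+ 2) / L%:R <= aa ^+ 2 * l := e2.
  lra.
rewrite -mulrN expRM_natl expRN /l lnK ?posrE // exprVn. by [].
Qed.

End Tn.

Section Det.
Variables (R : realType) (n d : nat) (x : 'I_n -> 'rV[R]_d).

Lemma xt_l i i' : xt x i (lshift d i') 0 = (i' == i)%:R.
Proof. by rewrite /xt col_mxEu mxE eqxx andbT. Qed.

Lemma xt_r i k : xt x i (rshift n k) 0 = x i 0 k.
Proof. by rewrite /xt col_mxEd mxE. Qed.

Lemma sum_l2r i : \sum_(k < d) x i 0 k ^+ 2 = l2r (x i) ^+ 2.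
Proof. by rewrite /l2r sqr_sqrtr //; apply: sumr_ge0 => k _; exact: sqr_ge0. Qed.

Lemma xt_sq_le1 :
  (d < n)%N -> (forall i, l2r (x i) <= Num.sqrt ((d.+1)%:R / n%:R)) ->
  forall i k, xt x i k 0 ^+ 2 <= 1.
Proof.
move=> hdn hx i k.
rewrite -[k]splitK; case: (fintype.split k) => k' /=.
  by rewrite xt_l; case: (k' == i); rewrite ?expr1n ?expr0n ?ler01.
rewrite xt_r.
have n0 : (0 : R) < n%:R by rewrite ltr0n; apply: leq_ltn_trans hdn.
apply: (@le_trans _ _ (l2r (x i) ^+ 2)).
  rewrite -sum_l2r (bigD1 k') //= lerDl; apply: sumr_ge0 => j _; exact: sqr_ge0.
apply: (@le_trans _ _ ((d.+1)%:R / n%:R)).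
  have h0 : 0 <= l2r (x i) by exact: sqrtr_ge0.
  have h1 := hx i.
  rewrite -(@sqr_sqrtr _ ((d.+1)%:R / n%:R)); last by apply: divr_ge0; rewrite ?ler0n ?ltW.
  by rewrite ler_pXn2r // ?nnegrE ?sqrtr_ge0.
by rewrite ler_pdivrMr // mul1r ler_nat.
Qed.

Lemma vk_sq_le4 (a : 'I_n -> R) : (forall i, a i ^+ 2 <= 1) ->
  forall i j, (a i - a j) ^+ 2 <= 4.
Proof.
move=> ha i j; have hi := ha i; have hj := ha j.
have := sqr_ge0 (a i + a j); rewrite !expr2 in hi hj *; nra.
Qed.

Lemma Wsum_le (a : 'I_n -> R) :
  Wsum (fun i j => a i - a j) <= 4 * n%:R * \sum_(i < n) a i ^+ 2.
Proof.
rewrite /Wsum.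
apply: (@le_trans _ _ (\sum_(i < n) \sum_(j < n) (2 * a i ^+ 2 + 2 * a j ^+ 2))).
  apply: ler_sum => i _; rewrite big_mkcond /=; apply: ler_sum => j _.
  case: ifP => _.
    have := sqr_ge0 (a i + a j); rewrite !expr2; nra.
  by apply: addr_ge0; apply: mulr_ge0 => //; exact: sqr_ge0.
rewrite (eq_bigr (fun i => 2 * a i ^+ 2 * n%:R + 2 * \sum_(j < n) a j ^+ 2)); last first.
  by move=> i _; rewrite big_split /= sumr_const card_ord -mulr_sumr mulr_natr.
rewrite big_split /= -mulr_suml -mulr_sumr sumr_const card_ord -mulr_natr.
rewrite le_eqVlt; apply/orP; left; apply/eqP; ring.
Qed.

End Det.

Lemma l2c_ge0 (R : realType) m (v : 'cV[R]_m) : 0 <= l2c v.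
Proof. exact: sqrtr_ge0. Qed.

Section TauB.
Variables (R : realType) (n d L : nat) (x : 'I_n -> 'rV[R]_d) (ths : 'cV[R]_(n + d)).

Lemma kappa2_ge0 : 0 <= kappa2 ths.
Proof. exact: bigmax_ge_id. Qed.

Lemma kappa3_ge0 : 0 <= kappa3 ths.
Proof. by apply: divr_ge0; exact: sqrtr_ge0. Qed.

Lemma tau_factor_ge0 : 0 <= tau_factor x ths.
Proof.
have k2 := kappa2_ge0; have k3 := kappa3_ge0.
have hb : 0 <= (kappa3 ths * Num.sqrt (d.+1)%:R)^-1.
  by rewrite invr_ge0; apply: mulr_ge0 => //; exact: sqrtr_ge0.
have ha : 0 <= kappa1 x ths / kappa2 ths.
  by apply: divr_ge0 => //; exact: expR_ge0.
rewrite /tau_factor; case: ifP => _; case: ifP => _ //.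
by rewrite le_min ha hb.
Qed.

Lemma tau_factor_l2c : (0 < n)%N -> tau_factor x ths * l2c ths <= Num.sqrt n%:R.
Proof.
move=> n0.
have sn : 0 < Num.sqrt (n%:R : R) by rewrite sqrtr_gt0 ltr0n.
have e : l2c ths = kappa3 ths * Num.sqrt n%:R.
  by rewrite /kappa3 divfK // gt_eqF.
have sd : 1 <= Num.sqrt ((d.+1)%:R : R).
  have h0 := sqrtr_ge0 ((d.+1)%:R : R).
  have h1 : Num.sqrt ((d.+1)%:R : R) ^+ 2 = (d.+1)%:R by rewrite sqr_sqrtr ?ler0n.
  have h2 : (1:R) <= (d.+1)%:R by rewrite ler1n.
  rewrite expr2 in h1; nra.
have F0 := tau_factor_ge0.
case: (eqVneq (kappa3 ths) 0) => k3.
  by rewrite e k3 mul0r mulr0 ltW.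
have k3p : 0 < kappa3 ths by rewrite lt_def k3 kappa3_ge0.
have hb : tau_factor x ths <= (kappa3 ths * Num.sqrt (d.+1)%:R)^-1.
  rewrite /tau_factor (negbTE k3); case: ifP => _ //.
  by rewrite ge_min lexx orbT.
apply: le_trans (ler_wpM2r (l2c_ge0 ths) hb) _.
rewrite e.
have -> : (kappa3 ths * Num.sqrt (d.+1)%:R)^-1 * (kappa3 ths * Num.sqrt n%:R) =
  Num.sqrt n%:R / Num.sqrt (d.+1)%:R.
  by field; apply/andP; split; apply: lt0r_neq0; lra.
rewrite ler_pdivrMr; last lra.
rewrite -[X in X <= _]mulr1; apply: ler_wpM2l; lra.
Qed.

Lemma tau_bound (c_tau : R) : 0 < c_tau -> (0 < n)%N -> (0 < L)%N ->
  0 <= tau L c_tau x ths /\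
  tau L c_tau x ths * l2c ths <= c_tau * Num.sqrt (ln n%:R / L%:R).
Proof.
move=> ct n0 L0.
have F0 := tau_factor_ge0.
have Fl := tau_factor_l2c n0.
have s0 := sqrtr_ge0 (ln (n%:R : R) / (n%:R * L%:R)).
split.
  by rewrite /tau; apply: mulr_ge0 => //; apply: mulr_ge0 => //; lra.
rewrite /tau mulrAC -mulrA -mulrA.
apply: ler_wpM2l; first lra.
rewrite mulrA.
apply: le_trans (ler_wpM2r s0 Fl) _.
rewrite -sqrtrM ?ler0n //.
have -> : (n%:R : R) * (ln n%:R / (n%:R * L%:R)) = ln n%:R / L%:R.
  by field; apply/andP; split; rewrite pnatr_eq0 -lt0n.
by [].
Qed.

End TauB.


Section Fin.
Variables (R : realType) (c_p c_tau : R) (n d L : nat) (p : R)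
  (x : 'I_n -> 'rV[R]_d) (ths : 'cV[R]_(n + d)).

Definition Cc : R := 4 * C0 c_p + 2 * c_tau * Num.sqrt (c_p^-1).

Lemma abs_le_l2c (k : 'I_(n + d)) : `|ths k 0| <= l2c ths.
Proof.
rewrite -sqrtr_sqr /l2c ler_sqrt; last by apply: sumr_ge0 => m _; exact: sqr_ge0.
rewrite (bigD1 k) //= lerDl; apply: sumr_ge0 => m _; exact: sqr_ge0.
Qed.

Lemma sum_last_le : \sum_(k < d) ths (rshift n k) 0 ^+ 2 <= l2c ths ^+ 2.
Proof.
rewrite l2c_sq big_split_ord /= lerDr; apply: sumr_ge0 => m _; exact: sqr_ge0.
Qed.

Lemma sum_xt_l (i : 'I_n) : \sum_(i' < n) xt x i' (lshift d i) 0 ^+ 2 = 1.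
Proof.
rewrite (bigD1 i) //= xt_l eqxx expr1n big1 ?addr0 // => j /negbTE hj.
by rewrite xt_l eq_sym hj expr0n.
Qed.

Lemma sum_sum_x :
  (forall i, l2r (x i) <= Num.sqrt ((d.+1)%:R / n%:R)) -> (0 < n)%N ->
  \sum_(k < d) \sum_(i < n) xt x i (rshift n k) 0 ^+ 2 <= (d.+1)%:R.
Proof.
move=> hx n0.
under eq_bigr => k _ do under eq_bigr => i _ do rewrite xt_r.
rewrite exchange_big /=.
under eq_bigr => i _ do rewrite sum_l2r.
have n0' : (0 : R) < n%:R by rewrite ltr0n.
apply: le_trans (_ : \sum_(i < n) ((d.+1)%:R / n%:R) <= _).
  apply: ler_sum => i _.
  have h0 : 0 <= l2r (x i) by exact: sqrtr_ge0.
  rewrite -(@sqr_sqrtr _ ((d.+1)%:R / n%:R)); last by apply: divr_ge0; rewrite ?ler0n ?ltW.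
  by rewrite ler_pXn2r // ?nnegrE ?sqrtr_ge0.
by rewrite sumr_const card_ord -[(_ / _) *+ n]mulr_natr divfK ?gt_eqF.
Qed.

Lemma det_part (w : Omega n L) :
  0 < c_p -> 0 < c_tau -> (d < n)%N -> (0 < L)%N -> 0 < p ->
  c_p * ln (n%:R : R) < p * n%:R -> 1 <= ln (n%:R : R) ->
  (forall i, l2r (x i) <= Num.sqrt ((d.+1)%:R / n%:R)) ->
  (forall k, `|Sg x ths (vk x k) w| <= tk L p c_p (vk x k)) ->
  let g := grad (loss_tau c_tau x ths w) ths in
  (supnorm_first g <= Cc * Num.sqrt (n%:R * p * ln (n%:R : R) / L%:R)) &&
  (l2_last g <= Cc * Num.sqrt ((d.+1)%:R * n%:R * p * ln (n%:R : R) / L%:R)).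
Proof.
move=> cp ct hdn L0 p0 hpn hl hx hS /=.
set g := grad (loss_tau c_tau x ths w) ths.
have n0 : (0 < n)%N by apply: leq_ltn_trans hdn.
set l := ln (n%:R : R).
have {}hl : 1 <= l := hl.
have {}hpn : c_p * l < p * n%:R := hpn.
set nr := (n%:R : R); set Lr := (L%:R : R).
have nr0 : 0 < nr by rewrite /nr ltr0n.
have Lr0 : 0 < Lr by rewrite /Lr ltr0n.
set s := Num.sqrt (c_p^-1).
have s0 : 0 <= s by exact: sqrtr_ge0.
have s2 : s ^+ 2 = c_p^-1 by rewrite sqr_sqrtr // invr_ge0 ltW.
have a0 := aa_gt0 cp.
have C00 : 0 <= C0 c_p by rewrite /C0; apply: divr_ge0; [apply: addr_ge0 => //; exact: sqr_ge0 | lra].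
set Q := Num.sqrt (nr * p * l / Lr).
have Z0 : 0 <= p * l / Lr by apply: divr_ge0; [apply: mulr_ge0|]; lra.
have X0 : 0 <= nr * p * l / Lr by rewrite -mulrA -mulrA; apply: mulr_ge0; [lra | rewrite mulrA].
have Q0 : 0 <= Q by exact: sqrtr_ge0.
have [tau0 tauB] := tau_bound x ths ct n0 L0.
set tt := tau L c_tau x ths in tau0 tauB.
set T := c_tau * Num.sqrt (l / Lr).
have hnp : c_p <= p * nr by have := ler_wpM2l (ltW cp) hl; rewrite mulr1; lra.
have lL : l / Lr <= c_p^-1 * (nr * p * l / Lr).
  have -> : c_p^-1 * (nr * p * l / Lr) = l / Lr * (c_p^-1 * (p * nr)) by rewrite /nr; ring.
  apply: ler_peMr; first by apply: divr_ge0; lra.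
  by rewrite ler_pdivlMl // mulr1.
have TQ : T <= c_tau * s * Q.
  rewrite /T -mulrA; apply: ler_wpM2l; first lra.
  rewrite /s /Q -sqrtrM; last by rewrite invr_ge0 ltW.
  by rewrite ler_sqrt //; apply: mulr_ge0 => //; rewrite invr_ge0 ltW.
have gE k : g k = Sg x ths (vk x k) w + tt * ths k 0 by rewrite /g grad_eq.
have tth k : `|tt * ths k 0| <= T.
  rewrite normrM ger0_norm //; apply: le_trans tauB.
  by apply: ler_wpM2l => //; exact: abs_le_l2c.
have xt1 := xt_sq_le1 hdn hx.
apply/andP; split.
  apply: bigmax_le; first by apply: mulr_ge0 => //; rewrite /Cc; apply: addr_ge0; apply: mulr_ge0 => //; lra.
  move=> i _; rewrite gE.
  apply: le_trans (ler_normD _ _) _.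
  have hW : Wsum (vk x (lshift d i)) <= 4 * nr.
    have := Wsum_le (fun i' => xt x i' (lshift d i) 0).
    by rewrite sum_xt_l mulr1.
  have htk : tk L p c_p (vk x (lshift d i)) <= C0 c_p * (3 * Q).
    rewrite /tk; apply: ler_wpM2l => //.
    have -> : (3 : R) = Num.sqrt (3 ^+ 2) by rewrite sqrtr_sqr ger0_norm.
    rewrite /Q -sqrtrM ?sqr_ge0 // ler_sqrt; last by apply: mulr_ge0 => //; exact: sqr_ge0.
    have hW0 := Wsum_ge0 (vk x (lshift d i)).
    have -> : p * (Wsum (vk x (lshift d i)) + n%:R) * ln n%:R / L%:R =
       (Wsum (vk x (lshift d i)) + nr) * (p * l / Lr) by rewrite /nr /l /Lr; ring.
    have -> : 3 ^+ 2 * (nr * p * l / Lr) = (9 * nr) * (p * l / Lr) by rewrite /nr; ring.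
    by apply: ler_wpM2r => //; lra.
  have e : Cc * Num.sqrt (n%:R * p * ln n%:R / L%:R) = 4 * (C0 c_p * Q) + 2 * (c_tau * s * Q)
    by rewrite /Cc /Q /s /nr /l /Lr; ring.
  rewrite e.
  have m1 : 0 <= C0 c_p * Q by apply: mulr_ge0.
  have m2 : 0 <= c_tau * s * Q by apply: mulr_ge0 => //; apply: mulr_ge0 => //; lra.
  have h3 : C0 c_p * (3 * Q) = 3 * (C0 c_p * Q) by ring.
  have := hS (lshift d i); have := tth (lshift d i).
  lra.
rewrite /l2_last.
set Y := (d.+1)%:R * nr * p * l / Lr.
have Y0 : 0 <= Y by rewrite /Y -!mulrA; apply: mulr_ge0 => //; rewrite !mulrA.
have Cc0 : 0 <= Cc by rewrite /Cc; apply: addr_ge0; apply: mulr_ge0 => //; lra.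
suff hsum : \sum_(k < d) g (rshift n k) ^+ 2 <= Cc ^+ 2 * Y.
  apply: le_trans (_ : Num.sqrt (Cc ^+ 2 * Y) <= _).
    by rewrite ler_sqrt // mulr_ge0 // sqr_ge0.
  by rewrite sqrtrM ?sqr_ge0 // sqrtr_sqr ger0_norm.
set tkk := fun k : 'I_d => tk L p c_p (vk x (rshift n k)).
have hg k : g (rshift n k) ^+ 2 <= 2 * tkk k ^+ 2 + 2 * (tt * ths (rshift n k) 0) ^+ 2.
  rewrite gE.
  have h1 := hS (rshift n k).
  have h2 : Sg x ths (vk x (rshift n k)) w ^+ 2 <= tkk k ^+ 2.
    rewrite -real_normK ?num_real // [X in _ <= X]expr2 expr2.
    by apply: ler_pM => //; exact: normr_ge0.
  have := sqr_ge0 (Sg x ths (vk x (rshift n k)) w - tt * ths (rshift n k) 0).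
  rewrite !expr2 in h2 *; nra.
apply: le_trans (ler_sum _ (fun k _ => hg k)) _.
rewrite big_split /= -!mulr_sumr.
have htk k : tkk k ^+ 2 = C0 c_p ^+ 2 * ((Wsum (vk x (rshift n k)) + nr) * (p * l / Lr)).
  rewrite /tkk /tk exprMn sqr_sqrtr; last first.
    have := Wsum_ge0 (vk x (rshift n k)) => hW.
    have l0 : 0 <= l by lra.
    apply: divr_ge0 => //; apply: mulr_ge0; [apply: mulr_ge0|] => //; first exact: ltW.
    by apply: addr_ge0 => //; rewrite ler0n.
  by rewrite /nr /l /Lr; congr (_ * _); ring.
under eq_bigr => k _ do rewrite htk.
rewrite -mulr_sumr -mulr_suml.
have hWs : \sum_(k < d) (Wsum (vk x (rshift n k)) + nr) <= 5 * nr * (d.+1)%:R.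
  rewrite big_split /= sumr_const card_ord.
  apply: le_trans (_ : 4 * nr * (d.+1)%:R + nr *+ d <= _); last first.
    have hd : (d%:R : R) <= (d.+1)%:R by rewrite ler_nat.
    have hd0 : (0:R) <= (d.+1)%:R by rewrite ler0n.
    have h0 : 0 <= nr * (d.+1)%:R by apply: mulr_ge0 => //; lra.
    have := ler_wpM2l (ltW nr0) hd.
    rewrite -[nr *+ d]mulr_natr; lra.
  rewrite lerD2r.
  apply: le_trans (_ : \sum_(k < d) 4 * nr * \sum_(i < n) xt x i (rshift n k) 0 ^+ 2 <= _).
    apply: ler_sum => k _; exact: (Wsum_le (fun i => xt x i (rshift n k) 0)).
  rewrite -mulr_sumr; apply: ler_wpM2l; first lra.
  exact: sum_sum_x.
have hth : \sum_(k < d) (tt * ths (rshift n k) 0) ^+ 2 <= c_tau ^+ 2 * s ^+ 2 * Y.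
  under eq_bigr => k _ do rewrite exprMn.
  rewrite -mulr_sumr.
  apply: le_trans (_ : tt ^+ 2 * l2c ths ^+ 2 <= _).
    by apply: ler_wpM2l; [exact: sqr_ge0 | exact: sum_last_le].
  rewrite -exprMn.
  have hT0 : 0 <= tt * l2c ths by apply: mulr_ge0 => //; exact: l2c_ge0.
  have hT : tt * l2c ths <= T by exact: tauB.
  apply: le_trans (_ : T ^+ 2 <= _).
    by rewrite ler_pXn2r // nnegrE; lra.
  rewrite /T exprMn sqr_sqrtr; last by apply: divr_ge0; lra.
  rewrite -mulrA; apply: ler_wpM2l; first exact: sqr_ge0.
  rewrite s2; apply: le_trans lL _.
  apply: ler_wpM2l; first by rewrite invr_ge0 ltW.
  rewrite /Y -[X in X <= _]mul1r -!mulrA; apply: ler_wpM2r.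
    by rewrite !mulrA.
  by rewrite ler1n.
have e1 : 2 * (C0 c_p ^+ 2 * ((\sum_(k < d) (Wsum (vk x (rshift n k)) + nr)) * (p * l / Lr)))
   <= 10 * C0 c_p ^+ 2 * Y.
  have : (\sum_(k < d) (Wsum (vk x (rshift n k)) + nr)) * (p * l / Lr) <= 5 * nr * (d.+1)%:R * (p * l / Lr)
    by apply: ler_wpM2r.
  have -> : 5 * nr * (d.+1)%:R * (p * l / Lr) = 5 * Y by rewrite /Y; ring.
  have := sqr_ge0 (C0 c_p); move=> h0 h; nra.
have e2 : Cc ^+ 2 * Y = (16 * C0 c_p ^+ 2 + 16 * (C0 c_p * (c_tau * s)) + 4 * (c_tau ^+ 2 * s ^+ 2)) * Y
  by rewrite /Cc /s; ring.
rewrite e2.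
have m1 : 0 <= C0 c_p * (c_tau * s) * Y by apply: mulr_ge0 => //; apply: mulr_ge0 => //; apply: mulr_ge0 => //; lra.
have m2 : 0 <= C0 c_p ^+ 2 * Y by apply: mulr_ge0 => //; exact: sqr_ge0.
have m3 : 0 <= c_tau ^+ 2 * s ^+ 2 * Y by apply: mulr_ge0 => //; apply: mulr_ge0; exact: sqr_ge0.
nra.
Qed.

End Fin.

Lemma ln_ge1 (R : realType) (n : nat) : (4 <= n)%N -> 1 <= ln (n%:R : R).
Proof.
move=> hn.
have h1 := expR_ge1Dx (- (1/2) : R).
have h2 : expR (1/2 : R) <= 2.
  rewrite -[X in expR X]opprK expRN.
  rewrite -[X in _ <= X]invrK lef_pV2 ?posrE ?expR_gt0 //; lra.
have h3 : expR (1 : R) <= 4.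
  have -> : (1 : R) = 1/2 + 1/2 by field.
  rewrite expRD.
  have h0 := expR_gt0 (1/2 : R).
  nra.
rewrite -[X in X <= _](expRK 1) ler_ln ?posrE ?expR_gt0 ?ltr0n //; last by apply: leq_trans hn.
apply: le_trans h3 _.
by rewrite (ler_nat _ 4).
Qed.

Lemma Sg_N (R : realType) n d L (x : 'I_n -> 'rV[R]_d) ths v (w : Omega n L) :
  Sg x ths (fun i j => - v i j) w = - Sg x ths v w.
Proof.
rewrite /Sg -sumrN; apply: eq_bigr => i _; rewrite -sumrN; apply: eq_bigr => j _.
by rewrite mulrN.
Qed.

Lemma tk_N (R : realType) n L (p c_p : R) (v : 'I_n -> 'I_n -> R) :
  tk L p c_p (fun i j => - v i j) = tk L p c_p v.
Proof. by rewrite /tk Wsum_N. Qed.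

Theorem lemma20 (R : realType) (c_p c_1 c_tau : R) :
  0 < c_p -> 0 < c_1 -> 0 < c_tau ->
  exists (C C' : R) (N : nat), 0 < C /\ 0 < C' /\
  forall (n d L : nat) (p : R) (x : 'I_n -> 'rV[R]_d) (ths : 'cV[R]_(n + d)),
    (N <= n)%N -> (d < n)%N -> (0 < L)%N ->
    0 < p <= 1 ->
    c_p * ln (n%:R : R) < p * n%:R ->
    (forall i : 'I_n, l2r (x i) <= Num.sqrt ((d.+1)%:R / n%:R)) ->
    (forall v : 'cV[R]_(n + d), l2c (Sigma x *m v) <= c_1 * n%:R * l2c v) ->
    Prob p x ths
      (fun w : Omega n L =>
         let g := grad (loss_tau c_tau x ths w) ths in
         (supnorm_first g <= C * Num.sqrt (n%:R * p * ln (n%:R : R) / L%:R)) &&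
         (l2_last g <= C * Num.sqrt ((d.+1)%:R * n%:R * p * ln (n%:R : R) / L%:R)))
    >= 1 - C' / (n%:R ^+ 10).
Proof.
move=> cp c1 ct.
exists (Cc c_p c_tau), 4, 4%N.
have a0 := aa_gt0 cp.
have C0p : 0 < C0 c_p.
  by rewrite /C0; apply: divr_gt0 => //; have := sqr_ge0 (aa c_p); lra.
split.
  rewrite /Cc; have := sqrtr_ge0 (c_p^-1) => hs.
  have : 0 <= c_tau * Num.sqrt c_p^-1 by apply: mulr_ge0 => //; lra.
  lra.
split; first lra.
move=> n d L p x ths hN hdn hL /andP[p0 p1] hpn hx hSig.
have n0 : (0 < n)%N by apply: leq_trans hN.
have hl : 1 <= ln (n%:R : R) := ln_ge1 R hN.
have p01 : 0 <= p <= 1 by apply/andP; split; lra.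
have p01' : 0 < p <= 1 by apply/andP; split; lra.
have xt1 := xt_sq_le1 hdn hx.
pose B := fun (kb : 'I_(n + d) * bool) (w : Omega n L) =>
  if kb.2 then tk L p c_p (vk x kb.1) < Sg x ths (vk x kb.1) w
  else tk L p c_p (fun i j => - vk x kb.1 i j) < Sg x ths (fun i j => - vk x kb.1 i j) w.
apply: le_trans (prob_union x ths p01 (B := B) _).
  have nr0 : (0 : R) < n%:R by rewrite ltr0n.
  have hb : forall kb, Prob p x ths (B kb) <= (n%:R ^+ 11)^-1.
    move=> [k [|]]; rewrite /B /=.
      apply: tail_n => // i j _; exact: vk_sq_le4 (fun i => xt1 i k) i j.
    apply: tail_n => // i j _; rewrite sqrrN; exact: vk_sq_le4 (fun i => xt1 i k) i j.
  rewrite lerD2l lerN2.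
  apply: le_trans (ler_sum _ (fun kb _ => hb kb)) _.
  rewrite sumr_const card_prod card_ord card_bool.
  have e : ((n%:R : R) ^+ 11)^-1 *+ ((n + d) * 2) = ((n + d) * 2)%:R / n%:R * (n%:R ^+ 10)^-1.
    rewrite -mulr_natl exprS invfM; field.
    by rewrite pnatr_eq0 -lt0n.
  rewrite e; apply: ler_wpM2r; first by rewrite invr_ge0 exprn_ge0 // ltW.
  rewrite ler_pdivrMr // -natrM ler_nat.
  rewrite mulnC; apply: (@leq_trans (2 * (n + n))); first by rewrite leq_mul2l leq_add2l ltnW.
  by rewrite mulnDr -mulnDl.
move=> w hE.
case: (pickP (fun kb => B kb w)) => [kb hkb | hnone]; first by exists kb.
exfalso; move/negP: hE; apply.
apply: det_part => // k.
have h1 := hnone (k, true); have h2 := hnone (k, false).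
rewrite /B /= in h1 h2.
rewrite tk_N Sg_N in h2.
move/negbT: h1; rewrite -leNgt => h1.
move/negbT: h2; rewrite -leNgt => h2.
by rewrite ler_norml h1 andbT -lerNl.
Qed.
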